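(* Let $W\in\mathbb{D}_n$ be a nonsingular Dale matrix satisfying the Ground Assumption with $\|W\|_F=\sqrt{\mathrm{trace}(W^TW)}<1$. Then for every $b\in\mathbb{R}^n_{\ge0}$ the network $(W,b)$ has a unique fixed point, and it is globally exponentially stable; in particular every fixed point is asymptotically stable. Moreover $\mathcal{C}(W)=\mathcal{SC}(W)=\mathrm{code}(G_\mathcal{E},\mathcal{E_U})$.
   Context: Threshold-linear network: $\dot x_i=-x_i+[\sum_j W_{ij}x_j+b_i]_+$ with $[y]_+=\max(0,y)$; a fixed point is $x^*$ with $x^*=[Wx^*+b]_+$. A Dale matrix $W\in\mathbb{D}_n$ is an $n\times n$ real matrix with a partition $[n]=\mathcal{E}\sqcup\mathcal{I}$ such that $W_{ii}=0$, $W_{ji}\ge0$ for all $j$ if $i\in\mathcal{E}$, $W_{ji}\le 0$ for all $j$ if $i\in\mathcal{I}$. Ground Assumption: $(I-W)_\sigma$ nonsingular for every nonempty $\sigma\subset[n]$. Excitatory support: $\mathrm{supp}_+x=\{i\in\mathcal{E}:x_i>0\}$. Combinatorial code: $\mathcal{C}(W)=\{\mathrm{supp}_+x^*: b\in\mathbb{R}^n_{\ge0},\ x^*\in\mathbb{R}^n_{\ge0}\text{ a fixed point of }(W,b)\}$. Stable combinatorial code: $\mathcal{SC}(W)=\{\mathrm{supp}_+x^*: b\in\mathbb{R}^n_{\ge0},\ x^*\in\mathbb{R}^n_{\ge0}\text{ an asymptotically stable fixed point of }(W,b)\}$. $G_\mathcal{E}$: directed graph on $\mathcal{E}$ with arc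 $i\to j$ iff $i\ne j$ and $W_{ji}>0$. $\mathcal{E_U}=\{j\in\mathcal{E}:W_{ji}=0\ \forall i\in\mathcal{I}\}$. $N^+_G(\sigma)=\bigcup_{i\in\sigma}\{j: i\to j\}$, and $\mathrm{code}(G,U)=\{\sigma\subset\mathcal{E}: N^+_G(\sigma)\cap U\subset\sigma\}$. *)

(* Defs.v *)
From HB Require Import structures.
From mathcomp Require Import all_boot all_order all_algebra.
From mathcomp Require Import all_classical all_reals all_analysis.
Set Implicit Arguments. Unset Strict Implicit. Unset Printing Implicit Defensive.
Import Order.TTheory GRing.Theory Num.Theory.
Import numFieldNormedType.Exports.
Local Open Scope classical_set_scope.
Local Open Scope ring_scope.

Section TLN.
Variables (R : realType) (n : nat).
Implicit Types (W : 'M[R]_n) (E : {set 'I_n}) (b x : 'cV[R]_n).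

Definition relu (y : R) : R := Num.max 0 y.

Definition vnorm (v : 'cV[R]_n) : R := Num.sqrt (\sum_i (v i 0) ^+ 2).

Definition frob_norm W : R := Num.sqrt (\tr (W^T *m W)).

Definition dale_matrix W E : Prop :=
  (forall i, W i i = 0) /\
  (forall i j, i \in E -> 0 <= W j i) /\
  (forall i j, i \notin E -> W j i <= 0).

Definition principal_submx (A : 'M[R]_n) (s : {set 'I_n}) : 'M[R]_#|s| :=
  mxsub (@enum_val _ (mem s)) (@enum_val _ (mem s)) A.

Definition ground_assumption W : Prop :=
  forall s : {set 'I_n}, (0 < #|s|)%N -> principal_submx (1%:M - W) s \in unitmx.

Definition nonneg_vec x : Prop := forall i, 0 <= x i 0.

Definition fixed_point W b x : Prop :=
  forall i, x i 0 = relu ((W *m x) i 0 + b i 0).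

(* x : R -> R^n is a solution (forward trajectory on [0,+oo)) of
   dx_i/dt = - x_i + [ (W x)_i + b_i ]_+ *)
Definition is_traj W b (x : R -> 'cV[R]_n) : Prop :=
  (forall i, x s i 0 @[s --> 0^'+] --> x 0 i 0) /\
  (forall t : R, 0 < t -> forall i,
     is_derive t (1 : R) (fun s : R => x s i 0) (- x t i 0 + relu ((W *m x t) i 0 + b i 0))).

Definition asympt_stable W b xs : Prop :=
  fixed_point W b xs /\
  (forall eps : R, 0 < eps -> exists2 delta : R, 0 < delta &
     forall x : R -> 'cV[R]_n, is_traj W b x -> vnorm (x 0 - xs) < delta ->
       forall t : R, 0 <= t -> vnorm (x t - xs) < eps) /\
  (exists2 eta : R, 0 < eta &
     forall x : R -> 'cV[R]_n, is_traj W b x -> vnorm (x 0 - xs) < eta ->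
       vnorm (x t - xs) @[t --> +oo%R] --> 0).

Definition glob_exp_stable W b xs : Prop :=
  fixed_point W b xs /\
  exists M c : R, 0 < M /\ 0 < c /\
    forall x : R -> 'cV[R]_n, is_traj W b x -> forall t : R, 0 <= t ->
      vnorm (x t - xs) <= M * expR (- (c * t)) * vnorm (x 0 - xs).

Definition supp_plus E x : {set 'I_n} := [set i in E | 0 < x i 0].

Definition comb_code W E : set {set 'I_n} :=
  [set s : {set 'I_n} | exists b x, nonneg_vec b /\ nonneg_vec x /\ fixed_point W b x /\
                       s = supp_plus E x].

Definition stable_comb_code W E : set {set 'I_n} :=
  [set s : {set 'I_n} | exists b x, nonneg_vec b /\ nonneg_vec x /\ asympt_stable W b x /\
                       s = supp_plus E x].

Definition arcE W E (i j : 'I_n) : bool :=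
  [&& i \in E, j \in E, i != j & 0 < W j i].

Definition E_U W E : {set 'I_n} :=
  [set j in E | [forall i, (i \notin E) ==> (W j i == 0)]].

Definition out_nbhd W E (s : {set 'I_n}) : {set 'I_n} :=
  [set j | [exists i in s, arcE W E i j]].

Definition graph_code W E (U : {set 'I_n}) : set {set 'I_n} :=
  [set s : {set 'I_n} | (s \subset E) && (out_nbhd W E s :&: U \subset s)].

End TLN.

(* Main.v *)
Require Import Defs.
From HB Require Import structures.
From mathcomp Require Import all_boot all_order all_algebra.
From mathcomp Require Import all_classical all_reals all_analysis.
From mathcomp Require Import ring lra.
Import Order.TTheory GRing.Theory Num.Theory.
Import numFieldNormedType.Exports.
Local Open Scope classical_set_scope.
Local Open Scope ring_scope.
Set Implicit Arguments. Unset Strict Implicit. Unset Printing Implicit Defensive.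

Section Alg.
Variable R : realType.

Lemma CS (m : nat) (a b : 'I_m -> R) :
  (\sum_i a i * b i) ^+ 2 <= (\sum_i a i ^+ 2) * (\sum_i b i ^+ 2).
Proof.
set A := \sum_i a i ^+ 2; set B := \sum_i b i ^+ 2; set C := \sum_i a i * b i.
have A0 : 0 <= A by apply: sumr_ge0 => i _; exact: sqr_ge0.
have [A_0|Apos] := eqVneq A 0.
  have ai0 : forall i, a i = 0.
    move=> i; move/eqP: A_0; rewrite psumr_eq0 => [/allP/(_ i)|]; last by move=> j _; exact: sqr_ge0.
    by rewrite mem_index_enum => /(_ isT); rewrite sqrf_eq0 => /eqP.
  rewrite /C big1 ?expr0n ?A_0 ?mul0r //= => i _; by rewrite ai0 mul0r.
have Ap : 0 < A by rewrite lt_def Apos A0.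
have e : \sum_i (C * a i - A * b i) ^+ 2 = A * (A * B - C ^+ 2).
  have ri : forall x y z w : R, (z * x - w * y) ^+ 2 = z ^+ 2 * x ^+ 2 - 2 * z * w * (x * y) + w ^+ 2 * y ^+ 2 by move=> *; ring.
  rewrite (eq_bigr (fun i => C^+2 * a i ^+ 2 - (2 * C * A) * (a i * b i) + A^+2 * b i ^+ 2)); last by move=> i _; exact: ri.
  rewrite big_split /= sumrB -!mulr_sumr.
  rewrite -/A -/B -/C.
  have ri2 : forall x y z : R, z^+2 * x - 2*z*x*z + x^+2*y = x*(x*y - z^+2) by move=> *; ring.
  exact: ri2.
have : 0 <= A * (A * B - C ^+ 2) by rewrite -e; apply: sumr_ge0 => i _; exact: sqr_ge0.
by rewrite pmulr_rge0 // subr_ge0.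
Qed.
End Alg.

Section Vec.
Variables (R : realType) (n : nat).
Implicit Types (A : 'M[R]_n) (c v x y : 'cV[R]_n).

Definition Qn v : R := \sum_i (v i 0) ^+ 2.
Definition Sn A : R := \sum_i \sum_j (A i j) ^+ 2.
Definition Fn A c x : 'cV[R]_n := \col_i relu ((A *m x) i 0 + c i 0).

Lemma Qn_ge0 v : 0 <= Qn v.
Proof. by apply: sumr_ge0 => i _; exact: sqr_ge0. Qed.

Lemma Sn_ge0 A : 0 <= Sn A.
Proof. by apply: sumr_ge0 => i _; apply: sumr_ge0 => j _; exact: sqr_ge0. Qed.

Lemma Qn_eq0 v : Qn v = 0 -> v = 0.
Proof.
move/eqP; rewrite psumr_eq0; last by move=> i _; exact: sqr_ge0.
move=> /allP h; apply/matrixP => i j; rewrite (ord1 j) mxE.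
by move: (h i (mem_index_enum _)); rewrite sqrf_eq0 => /eqP.
Qed.

Lemma Qn_term v i : (v i 0) ^+ 2 <= Qn v.
Proof.
rewrite /Qn (bigD1 i) //= lerDl; apply: sumr_ge0 => j _; exact: sqr_ge0.
Qed.

Lemma relu_lip (a b : R) : (relu a - relu b) ^+ 2 <= (a - b) ^+ 2.
Proof.
rewrite /relu; case: (lerP 0 a) => ha; case: (lerP 0 b) => hb;
  rewrite ?(max_r ha) ?(max_r hb) ?(max_l (ltW ha)) ?(max_l (ltW hb)).
- by [].
- have hh : 0 <= (-b) * (2*a - b) by apply: mulr_ge0; lra.
  nra.
- have hh : 0 <= (-a) * (2 * b - a) by apply: mulr_ge0; lra.
  nra.
- rewrite subr0 expr0n /=; exact: sqr_ge0.
Qed.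

Lemma relu_ge0 (a : R) : 0 <= relu a.
Proof. by rewrite /relu le_max lexx. Qed.

Lemma relu_ge (a : R) : a <= relu a.
Proof. by rewrite /relu le_max lexx orbT. Qed.

Lemma relu_id (a : R) : 0 <= a -> relu a = a.
Proof. by move=> h; rewrite /relu (max_r h). Qed.

Lemma QnMx A v : Qn (A *m v) <= Sn A * Qn v.
Proof.
rewrite /Qn /Sn mulr_suml; apply: ler_sum => i _.
rewrite mxE; exact: CS.
Qed.

Lemma Fn_lip A c x y : Qn (Fn A c x - Fn A c y) <= Sn A * Qn (x - y).
Proof.
apply: le_trans (QnMx A (x - y)); apply: ler_sum => i _.
rewrite mulmxBr !mxE (le_trans (relu_lip _ _)) //.
by rewrite opprD addrACA subrr addr0.
Qed.

End Vec.

Lemma exN (R : realType) (z e : R) : 0 <= z -> z < 1 -> 0 < e -> exists N : nat, z ^+ N < e.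
Proof.
move=> z0 z1 e0.
have h : (fun k => z ^+ k) @ \oo --> (0:R) by apply: cvg_expr; rewrite ger0_norm.
have [N _ hN] := cvgr0_norm_lt _ h _ e0.
exists N; have := hN N (leqnn N); by rewrite ger0_norm ?exprn_ge0.
Qed.

Lemma sq_le (R : realType) (a b : R) : 0 <= b -> a ^+ 2 <= b ^+ 2 -> a <= b.
Proof.
move=> b0 h; apply: le_trans (ler_norm a) _.
by rewrite -sqrtr_sqr -(ger0_norm b0) -sqrtr_sqr ler_sqrt // sqr_ge0.
Qed.

Lemma sq_mono (R : realType) (a b : R) : 0 <= a -> a <= b -> a ^+ 2 <= b ^+ 2.
Proof. by move=> a0 ab; rewrite !expr2 ler_pM. Qed.

Definition Vt (R : realType) n := 'cV[R]_n.
HB.instance Definition _ (R : realType) n := NormedModule.copy (Vt R n) 'cV[R]_n.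
HB.instance Definition _ (R : realType) n := Complete.copy (Vt R n) 'cV[R]_n.

Section Fix.
Variables (R : realType) (n : nat).
Implicit Types (A : 'M[R]_n) (c v x y : 'cV[R]_n).

Lemma normV_ge (v : Vt R n) i : `|v i 0| <= `|v|.
Proof.
have -> : `|v| = mx_norm v by [].
rewrite mx_normrE; exact: (le_bigmax 0 (fun ij : 'I_n * 'I_1 => `|v ij.1 ij.2|) (i, 0)).
Qed.

Lemma normV_sq (v : Vt R n) : `|v| ^+ 2 <= Qn v.
Proof.
have h : `|v| <= Num.sqrt (Qn v).
  have -> : `|v| = mx_norm v by [].
  rewrite mx_normrE; apply: bigmax_le => [|[i j] _]; first exact: sqrtr_ge0.
  rewrite (ord1 j) /= -sqrtr_sqr ler_sqrt ?Qn_ge0 //; exact: Qn_term.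
by rewrite -(sqr_sqrtr (Qn_ge0 v)); apply: sq_mono.
Qed.

Lemma Qn_le_norm (v : Vt R n) : Qn v <= n%:R * `|v| ^+ 2.
Proof.
rewrite /Qn; apply: (@le_trans _ _ (\sum_(i < n) `|v| ^+ 2)).
  apply: ler_sum => i _; rewrite -[(v i 0) ^+ 2]real_normK ?num_real //.
  by apply: sq_mono; [exact: normr_ge0|exact: normV_ge].
by rewrite sumr_const card_ord mulr_natl.
Qed.

Lemma iter_lip A c N x y :
  Qn (iter N (Fn A c) x - iter N (Fn A c) y) <= Sn A ^+ N * Qn (x - y).
Proof.
elim: N => [|N ih]; first by rewrite expr0 mul1r.
rewrite !iterS; apply: le_trans (Fn_lip _ _ _ _) _.
by rewrite exprS -mulrA ler_wpM2l // Sn_ge0.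
Qed.

Lemma fp_unique A c x y : Sn A < 1 -> Fn A c x = x -> Fn A c y = y -> x = y.
Proof.
move=> S1 hx hy; apply/eqP; rewrite -subr_eq0; apply/eqP; apply: Qn_eq0.
have := Fn_lip A c x y; rewrite hx hy => h.
apply/eqP; rewrite eq_le Qn_ge0 andbT.
have : (1 - Sn A) * Qn (x - y) <= 0 by rewrite mulrBl mul1r subr_le0.
by rewrite pmulr_rle0 // subr_gt0.
Qed.

Lemma fp_exists A c : Sn A < 1 -> exists x, Fn A c x = x.
Proof.
move=> S1.
have [N hN] : exists N : nat, Sn A ^+ N < (4 * (n.+1)%:R)^-1.
  by apply: exN; rewrite ?Sn_ge0 // invr_gt0 mulr_gt0.
pose G : Vt R n -> Vt R n := iter N (Fn A c).
have Glip : forall x y : Vt R n, `|G x - G y| <= 2^-1 * `|x - y|.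
  move=> x y; apply: sq_le; first by rewrite mulr_ge0 // invr_ge0.
  apply: le_trans (normV_sq _) _; apply: le_trans (iter_lip A c N x y) _.
  apply: le_trans (ler_wpM2l (exprn_ge0 N (Sn_ge0 A)) (Qn_le_norm (x - y))) _.
  rewrite mulrA exprMn; apply: ler_wpM2r; first exact: sqr_ge0.
  apply: le_trans (ler_wpM2r (ler0n _ n) (ltW hN)) _.
  rewrite ler_pdivrMl ?mulr_gt0 // -natr1.
  have := ler0n R n; lra.
have hc : is_contraction (totalfun_ [set: Vt R n] G : {fun [set: Vt R n] >-> [set: Vt R n]}).
  exists (2^-1)%:nng; split; first by rewrite /= invf_lt1 // ltr1n.
  by move=> [x y] _ /=; exact: Glip.
have [p _ hp0] := banach_fixed_point hc closedT (ex_intro _ 0 I).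
have hp : G p = p by exact: (esym hp0).
exists p; apply/eqP; rewrite -subr_eq0; apply/eqP; apply: Qn_eq0.
have hGF : G (Fn A c p) = Fn A c p by rewrite /G -iterSr iterS -/G hp.
have := iter_lip A c N (Fn A c p) p; rewrite -/G hGF hp => h.
have k1 : Sn A ^+ N < 1.
  apply: lt_le_trans hN _; rewrite invf_le1 ?mulr_gt0 // -natr1.
  have := ler0n R n; lra.
apply/eqP; rewrite eq_le Qn_ge0 andbT.
have : (1 - Sn A ^+ N) * Qn (Fn A c p - p) <= 0 by rewrite mulrBl mul1r subr_le0.
by rewrite pmulr_rle0 // subr_gt0.
Qed.

End Fix.

Section Dot.
Variables (R : realType) (n : nat).

Lemma dot_bound (W : 'M[R]_n) (b x xs : 'cV[R]_n) : Fn W b xs = xs ->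
  \sum_i (x i 0 - xs i 0) * (- x i 0 + relu ((W *m x) i 0 + b i 0))
    <= (Num.sqrt (Sn W) - 1) * Qn (x - xs).
Proof.
move=> hxs.
set v := x - xs; set d := Fn W b x - xs.
have e : \sum_i (x i 0 - xs i 0) * (- x i 0 + relu ((W *m x) i 0 + b i 0))
   = - Qn v + \sum_i v i 0 * d i 0.
  rewrite /Qn -sumrN -big_split /=; apply: eq_bigr => i _.
  rewrite /v /d !mxE; ring.
rewrite e mulrBl mul1r addrC lerD2r.
have hQ := Qn_ge0 v.
apply: sq_le; first by rewrite mulr_ge0 ?sqrtr_ge0.
apply: le_trans (CS (fun i => v i 0) (fun i => d i 0)) _.
rewrite -/(Qn v) -/(Qn d) exprMn sqr_sqrtr ?Sn_ge0 // expr2 mulrA.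
rewrite mulrC -mulrA [Qn v * _]mulrC mulrA ler_wpM2r //.
by have := Fn_lip W b x xs; rewrite hxs.
Qed.
End Dot.


Section Traj.
Variables (R : realType) (n : nat) (W : 'M[R]_n) (b xs : 'cV[R]_n) (x : R -> 'cV[R]_n).
Hypotheses (hxs : Fn W b xs = xs) (htr : is_traj W b x).

Let c : R := 1 - Num.sqrt (Sn W).
Let ff (i : 'I_n) : R -> R := (fun s => x s i 0) - cst (xs i 0).
Let qf : R -> R := \sum_i (ff i ^+ 2).
Let ef : R -> R := fun s => expR (2 * c * s).
Let g : R -> R := ef * qf.

Lemma qfE (s : R) : qf s = Qn (x s - xs).
Proof.
rewrite /qf fct_sumE /Qn; apply: eq_bigr => i _.
by rewrite exprfctE /ff !mxE.
Qed.

Lemma lin_der (a s : R) : is_derive s 1 (fun s => a * s) a.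
Proof.
have h := @is_deriveZ R R^o R^o id a s 1 1 (is_derive_id _ _).
by apply: is_derive_eq h _; rewrite /GRing.scale /= mulr1.
Qed.

Lemma ef_der (s : R) : is_derive s 1 ef (expR (2 * c * s) * (2 * c)).
Proof.
exact: (is_derive1_comp (f := expR) (g := fun s => 2 * c * s) (is_derive_expR _) (lin_der _ _)).
Qed.

Let dx (i : 'I_n) (s : R) : R := - x s i 0 + relu ((W *m x s) i 0 + b i 0).

Lemma qf_der (s : R) : 0 < s ->
  is_derive s 1 qf (\sum_i ((2%:R * ff i s ^+ 1) *: (dx i s - 0))).
Proof.
move=> s0; rewrite /qf; apply: is_derive_sum => i.
apply: is_deriveX; apply: is_deriveB.
exact: (htr.2 s s0 i).
Qed.

Lemma g_der (s : R) : 0 < s -> is_derive s 1 g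
  (ef s *: (\sum_i ((2%:R * ff i s ^+ 1) *: (dx i s - 0))) + qf s *: (expR (2 * c * s) * (2 * c))).
Proof. move=> s0; apply: is_deriveM; [exact: ef_der | exact: qf_der]. Qed.

Lemma D_le0 (s : R) : 0 < s ->
  ef s *: (\sum_i ((2%:R * ff i s ^+ 1) *: (dx i s - 0))) + qf s *: (expR (2 * c * s) * (2 * c)) <= 0.
Proof.
move=> s0.
have hsum : \sum_i ((2%:R * ff i s ^+ 1) *: (dx i s - 0)) <= - (2 * c) * Qn (x s - xs).
  rewrite (eq_bigr (fun i => 2 * ((x s i 0 - xs i 0) * dx i s))); last first.
    by move=> i _; rewrite /GRing.scale /= /ff /= expr1 subr0 mulrA.
  rewrite -mulr_sumr mulNr -mulrA -mulrN; apply: ler_wpM2l => //.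
  apply: le_trans (dot_bound (x s) hxs) _.
  by rewrite /c -mulNr opprB.
rewrite qfE /GRing.scale /=.
have e0 : 0 <= ef s by rewrite /ef ltW // expR_gt0.
apply: le_trans (lerD (ler_wpM2l e0 hsum) (lexx _)) _.
have ri : forall E Q C : R, E * (- (2*C) * Q) + Q * (E * (2*C)) = 0 by move=> *; ring.
by rewrite /ef ri.
Qed.

Lemma cvg_fsum (T : Type) (F : set_system T) {FF : Filter F} m (h : 'I_m -> T -> R) (l : 'I_m -> R) :
  (forall i, h i @ F --> l i) -> (\sum_i h i) @ F --> \sum_i l i.
Proof.
move=> hl; elim/big_ind2 : _ => //; first exact: cvg_cst.
by move=> f a g0 b0 ha hb; exact: cvgD.
Qed.

Lemma g_cont : {within `[0, +oo[, continuous g}.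
Proof.
apply: derivable_oy_Rcontinuous_within_itvcy; split.
  move=> z; rewrite in_itv /= andbT => z0.
  by case: (g_der z0).
have he : ef z @[z --> 0^'+] --> ef 0.
  apply: cvg_at_right_filter.
  apply: (continuous_comp (f := fun z => 2 * c * z) (g := expR)); last exact: continuous_expR.
  exact: (cvgMl_tmp cvg_id).
have hq : Qn (x z - xs) @[z --> 0^'+] --> Qn (x 0 - xs).
  have e : (fun z => Qn (x z - xs)) = \sum_i (fun z => (x z i 0 - xs i 0) * (x z i 0 - xs i 0)).
    apply/funext => z; rewrite fct_sumE /Qn; apply: eq_bigr => i _; by rewrite !mxE expr2.
  have e0 : Qn (x 0 - xs) = \sum_i (x 0 i 0 - xs i 0) * (x 0 i 0 - xs i 0).
    rewrite /Qn; apply: eq_bigr => i _; by rewrite !mxE expr2.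
  rewrite e e0; apply: cvg_fsum => i.
  have hfi : (x z i 0 - xs i 0) @[z --> 0^'+] --> x 0 i 0 - xs i 0.
    apply: cvgB; [exact: htr.1 | exact: cvg_cst].
  exact: (cvgM hfi hfi).
have eg : g = ef \* (fun z => Qn (x z - xs)) by apply/funext => z; rewrite /= -qfE.
rewrite eg; exact: (cvgM he hq).
Qed.

Lemma decay (t : R) : 0 <= t -> Qn (x t - xs) <= expR (- (2 * c * t)) * Qn (x 0 - xs).
Proof.
move=> t0.
have h : g t <= g 0.
  have h1 : forall z, z \in `]0, +oo[%R -> derivable g z 1.
    by move=> z; rewrite in_itv /= andbT => z0; case: (g_der z0).
  have h2 : forall z, z \in `]0, +oo[%R -> derive1 g z <= 0.
    move=> z; rewrite in_itv /= andbT => z0.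
    have hg := g_der z0; rewrite derive1E derive_val; exact: D_le0.
  exact: (ler0_derive1_nincry h1 h2 g_cont (lexx 0) t0).
have hg : forall s, g s = expR (2 * c * s) * Qn (x s - xs) by move=> s; rewrite -qfE.
move: h; rewrite !hg mulr0 expR0 mul1r => h.
have -> : Qn (x t - xs) = expR (- (2 * c * t)) * (expR (2 * c * t) * Qn (x t - xs)).
  by rewrite mulrA -expRD addNr expR0 mul1r.
by apply: ler_wpM2l => //; exact: ltW (expR_gt0 _).
Qed.

End Traj.

Lemma cvg_exp_decay (R : realType) (c0 V0 : R) : 0 < c0 -> 0 <= V0 ->
  expR (- (c0 * t)) * V0 @[t --> +oo] --> 0.
Proof.
move=> c0p V00.
apply/cvgrPdist_le => e e0; near=> t.
rewrite sub0r normrN ger0_norm ?mulr_ge0 ?expR_ge0 //.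
rewrite expRN ler_pdivrMl ?expR_gt0 //.
have ht : V0 / (c0 * e) <= t by near: t; apply: nbhs_pinfty_ge; exact: num_real.
rewrite ler_pdivrMr ?mulr_gt0 // in ht.
apply: le_trans (ler_wpM2r (ltW e0) (expR_ge1Dx (c0 * t))).
nra.
Unshelve. all: end_near. Qed.

Section Stab.
Variables (R : realType) (n : nat) (W : 'M[R]_n) (b xs : 'cV[R]_n).
Hypotheses (S1 : Sn W < 1) (hxs : Fn W b xs = xs).

Lemma fpE (y : 'cV[R]_n) : fixed_point W b y <-> Fn W b y = y.
Proof.
split => [h|h i].
  by apply/matrixP => i j; rewrite (ord1 j) mxE -h.
by rewrite -[in LHS]h mxE.
Qed.

Let c0 : R := 1 - Num.sqrt (Sn W).

Lemma c0_gt0 : 0 < c0.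
Proof. by rewrite /c0 subr_gt0 -sqrtr1 ltr_sqrt. Qed.

Lemma vbound (x : R -> 'cV[R]_n) : is_traj W b x -> forall t, 0 <= t ->
  vnorm (x t - xs) <= expR (- (c0 * t)) * vnorm (x 0 - xs).
Proof.
move=> htr t t0.
have h := decay hxs htr t0.
rewrite /vnorm.
have -> : expR (- (c0 * t)) = Num.sqrt (expR (- (2 * (1 - Num.sqrt (Sn W)) * t))).
  have ri : forall a t : R, -(2*a*t) = -(a*t) + -(a*t) by move=> *; ring.
  by rewrite -/c0 ri expRD -expr2 sqrtr_sqr ger0_norm ?expR_ge0.
rewrite -sqrtrM ?expR_ge0 // ler_sqrt //; last by rewrite mulr_ge0 ?expR_ge0 ?Qn_ge0.
Qed.

Lemma vnorm_ge0 (v : 'cV[R]_n) : 0 <= vnorm v.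
Proof. exact: sqrtr_ge0. Qed.

Lemma ges : glob_exp_stable W b xs.
Proof.
split; first by apply/fpE.
exists 1, c0; split => //; split; first exact: c0_gt0.
move=> x htr t t0; rewrite mul1r; exact: vbound.
Qed.

Lemma ast : asympt_stable W b xs.
Proof.
split; first by apply/fpE.
split.
  move=> eps eps0; exists eps => // x htr h0 t t0.
  apply: le_lt_trans (vbound htr t0) _; apply: le_lt_trans _ h0.
  rewrite -[X in _ <= X]mul1r; apply: ler_wpM2r; first exact: vnorm_ge0.
  by rewrite expR_le1 oppr_le0 mulr_ge0 // ltW // c0_gt0.
exists 1 => // x htr _.
apply: (@squeeze_cvgr _ _ _ _ (cst 0) (fun t => expR (- (c0 * t)) * vnorm (x 0 - xs))).
- near=> t.
  have t0 : 0 <= t by near: t; apply: nbhs_pinfty_ge; exact: num_real.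
  by rewrite /cst vnorm_ge0 /= vbound.
- exact: cvg_cst.
- exact: cvg_exp_decay c0_gt0 (vnorm_ge0 _).
Unshelve. all: end_near. Qed.

End Stab.

Section Code.
Variables (R : realType) (n : nat) (W : 'M[R]_n) (E : {set 'I_n}).
Hypotheses (hD : dale_matrix W E) (S1 : Sn W < 1).

Lemma dE j k : k \in E -> 0 <= W j k.
Proof. by move=> kE; exact: hD.2.1. Qed.

Lemma dI j k : k \notin E -> W j k <= 0.
Proof. by move=> kE; exact: hD.2.2. Qed.

Lemma term_le_dsum (f : 'I_n -> 'I_n -> R) j k : (forall i k, 0 <= f i k) ->
  f j k <= \sum_i \sum_k f i k.
Proof.
move=> h.
have h1 : f j k <= \sum_k f j k.
  by rewrite (bigD1 k) //= lerDl; apply: sumr_ge0.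
have h2 : \sum_k f j k <= \sum_i \sum_k f i k.
  rewrite [X in _ <= X](bigD1 j) //= lerDl; apply: sumr_ge0 => i _; exact: sumr_ge0.
exact: le_trans h1 h2.
Qed.

Lemma EU_zero j : j \in E_U W E -> forall k, k \notin E -> W j k = 0.
Proof.
rewrite inE => /andP[_ /forallP h] k hk.
by move/implyP: (h k) => /(_ hk)/eqP.
Qed.

Lemma supp_closed (b x : 'cV[R]_n) : nonneg_vec b -> nonneg_vec x -> fixed_point W b x ->
  graph_code W E (E_U W E) (supp_plus E x).
Proof.
move=> hb hx hfix; rewrite /graph_code /=; apply/andP; split.
  by apply/fintype.subsetP => i; rewrite inE => /andP[].
apply/fintype.subsetP => j; rewrite inE => /andP[hn hu].
move: hn; rewrite inE => /existsP[i /andP[his harc]].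
move: his; rewrite inE => /andP[iE xi]; move: harc => /and4P[_ jE ij Wji].
rewrite inE jE /= hfix; apply: lt_le_trans (relu_ge _).
have h1 : W j i * x i 0 <= (W *m x) j 0.
  rewrite mxE (bigD1 i) //= lerDl; apply: sumr_ge0 => k _.
  case: (boolP (k \in E)) => kE; first by rewrite mulr_ge0 ?dE.
  by rewrite (EU_zero hu kE) mul0r.
apply: (lt_le_trans (mulr_gt0 Wji xi)); apply: le_trans h1 _.
by rewrite lerDl.
Qed.

Lemma row_le_dsum (f : 'I_n -> 'I_n -> R) j : (forall i k, 0 <= f i k) ->
  \sum_k f j k <= \sum_i \sum_k f i k.
Proof.
move=> h; rewrite [X in _ <= X](bigD1 j) //= lerDl; apply: sumr_ge0 => i _; exact: sumr_ge0.
Qed.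

Lemma FnE (A : 'M[R]_n) (c v : 'cV[R]_n) i : Fn A c v i 0 = relu ((A *m v) i 0 + c i 0).
Proof. by rewrite mxE. Qed.

Lemma relu_le0 (a : R) : a <= 0 -> relu a = 0.
Proof. by move=> h; rewrite /relu (max_l h). Qed.

Lemma code_realize (s : {set 'I_n}) : graph_code W E (E_U W E) s ->
  exists b x : 'cV[R]_n, nonneg_vec b /\ nonneg_vec x /\ Fn W b x = x /\ s = supp_plus E x.
Proof.
rewrite /graph_code /= => /andP[sE hcl].
have sEi i : i \in s -> i \in E by move=> hi; exact: (fintype.subsetP sE).
pose A : 'M[R]_n := \matrix_(i, j) (if (i \in s) && (j \in s) then W i j else 0).
pose c : 'cV[R]_n := \col_i (if i \in s then 1 else 0).
have SA : Sn A < 1.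
  apply: le_lt_trans S1; apply: ler_sum => i _; apply: ler_sum => j _.
  rewrite mxE; case: ifP => _ //; rewrite expr2 mul0r; exact: sqr_ge0.
have [y hy] := fp_exists c SA.
have yE i : y i 0 = relu ((A *m y) i 0 + c i 0) by rewrite -[in LHS]hy FnE.
have y0 i : 0 <= y i 0 by rewrite yE relu_ge0.
have yout i : i \notin s -> y i 0 = 0.
  move=> hi; rewrite yE !mxE (negbTE hi) /= addr0 big1 => [|j _]; first exact: relu_id (lexx 0).
  by rewrite mxE (negbTE hi) mul0r.
have WyE j : (W *m y) j 0 = \sum_k (if k \in s then W j k else 0) * y k 0.
  rewrite mxE; apply: eq_bigr => k _; case: ifP => hk //.
  by rewrite yout ?hk // !mulr0.
have WyS j : 0 <= \sum_k (if k \in s then W j k else 0) * y k 0.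
  apply: sumr_ge0 => k _; case: ifP => hk; last by rewrite mul0r.
  by apply: mulr_ge0 (y0 k); apply: dE; exact: sEi.
have AyE i : i \in s -> (A *m y) i 0 = \sum_k (if k \in s then W i k else 0) * y k 0.
  by move=> hi; rewrite mxE; apply: eq_bigr => k _; rewrite mxE hi.
have yin i : i \in s -> y i 0 = (W *m y) i 0 + 1.
  move=> hi; rewrite [in LHS]yE AyE // WyE mxE hi relu_id //.
  exact: addr_ge0 (WyS i) ler01.
have ypos i : i \in s -> 0 < y i 0.
  by move=> hi; rewrite yin // WyE; apply: lt_le_trans (ltr01) _; rewrite lerDr.
pose u : 'cV[R]_n := \col_i (if i \in E then 0 else 1).
pose Sy := \sum_i \sum_k `|W i k| * y k 0.
pose P := \sum_i \sum_k `|W i k|^-1.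
pose M := Sy * (1 + P).
have Sy0 : 0 <= Sy by apply: sumr_ge0 => i _; apply: sumr_ge0 => k _; exact: mulr_ge0.
have P0 : 0 <= P by apply: sumr_ge0 => i _; apply: sumr_ge0 => k _; rewrite invr_ge0.
have M0 : 0 <= M by rewrite mulr_ge0 // addr_ge0.
have SyM : Sy <= M by rewrite /M mulrDr mulr1 lerDl mulr_ge0.
pose x := y + M *: u.
have xE i : x i 0 = y i 0 + M * (if i \in E then 0 else 1) by rewrite !mxE.
have x0 i : 0 <= x i 0 by rewrite xE addr_ge0 // mulr_ge0 //; case: ifP.
have Nle j : \sum_k W j k * u k 0 <= 0.
  apply: sumr_le0 => k _; rewrite mxE; case: ifP => kE; first by rewrite mulr0.
  by rewrite mulr1 dI // kE.
have MN j : M * \sum_k W j k * u k 0 <= 0 by exact: mulr_ge0_le0 M0 (Nle j).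
have WxE j : (W *m x) j 0 = (W *m y) j 0 + M * \sum_k W j k * u k 0.
  by rewrite mulmxDr -scalemxAr !mxE.
have Wyle j : (W *m y) j 0 <= Sy.
  have h1 : (W *m y) j 0 <= \sum_k `|W j k| * y k 0.
    by rewrite mxE; apply: ler_sum => k _; apply: ler_wpM2r => //; exact: ler_norm.
  apply: le_trans h1 _; rewrite /Sy; apply: (@row_le_dsum (fun i k => `|W i k| * y k 0) j) => i k.
  exact: mulr_ge0.
pose bv : 'cV[R]_n := \col_i (if (i \in s) || (i \notin E) then x i 0 - (W *m x) i 0 else 0).
have bvE i : bv i 0 = if (i \in s) || (i \notin E) then x i 0 - (W *m x) i 0 else 0 by rewrite mxE.
exists bv, x; split; [|split; [exact: x0|split]].
- move=> i; rewrite bvE; case: ifP => // /orP[his|hiE].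
    rewrite subr_ge0 WxE xE (sEi i his) mulr0 addr0 (yin i his).
    have := MN i; lra.
  have his : i \notin s by apply: contra hiE; exact: sEi.
  rewrite subr_ge0 WxE xE (negbTE hiE) mulr1 (yout i his) add0r.
  have := MN i; have := Wyle i; lra.
- apply/matrixP => i j; rewrite (ord1 j) FnE bvE.
  case: ifP => h; first by rewrite (addrC ((W *m x) i 0)) subrK relu_id.
  move/negbT: h; rewrite negb_or negbK => /andP[his iE].
  rewrite addr0 [in RHS]xE iE mulr0 addr0 (yout i his); apply: relu_le0.
  case: (boolP (i \in E_U W E)) => hU.
    rewrite mxE big1 // => k _.
    case: (boolP (k \in E)) => kE; last by rewrite (EU_zero hU kE) mul0r.
    case: (boolP (k \in s)) => ks; last by rewrite xE kE mulr0 addr0 (yout k ks) mulr0.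
    have : W i k == 0.
      apply/negPn/negP => Wne.
      have Wpos : 0 < W i k by rewrite lt_def Wne dE.
      have : i \in out_nbhd W E s :&: E_U W E.
        rewrite inE hU andbT inE; apply/existsP; exists k; rewrite ks /= /arcE kE iE Wpos andbT /=.
        by apply: contraNneq his => <-.
      by move/(fintype.subsetP hcl); rewrite (negbTE his).
    by move/eqP => ->; rewrite mul0r.
  move: hU; rewrite inE iE /= negb_forall => /existsP[k0]; rewrite negb_imply => /andP[k0E Wne].
  rewrite WxE.
  have hk0 : \sum_k W i k * u k 0 <= W i k0.
    rewrite (bigD1 k0) //= mxE (negbTE k0E) mulr1.
    have : \sum_(k < n | k != k0) W i k * u k 0 <= 0.
      apply: sumr_le0 => k _; rewrite mxE; case: ifP => kE; first by rewrite mulr0.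
      by rewrite mulr1 dI // kE.
    lra.
  have Wneg : W i k0 < 0 by rewrite lt_neqAle Wne dI.
  have Pge : `|W i k0|^-1 <= P.
    by apply: (@term_le_dsum (fun a b => `|W a b|^-1)) => a b; rewrite invr_ge0.
  have nz : `|W i k0| != 0 by rewrite normr_eq0.
  have key : Sy <= M * `|W i k0|.
    have h1 := ler_wpM2l Sy0 (ler_wpM2r (normr_ge0 (W i k0)) Pge).
    rewrite mulVf // mulr1 in h1.
    have h2 := mulr_ge0 Sy0 (normr_ge0 (W i k0)).
    rewrite /M -mulrA mulrDl mul1r mulrDr; lra.
  have e : M * `|W i k0| = - (M * W i k0) by rewrite ltr0_norm // mulrN.
  have h3 := ler_wpM2l M0 hk0.
  have := Wyle i; lra.
- apply/setP => i; rewrite /supp_plus inE xE.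
  case: (boolP (i \in s)) => his.
    by rewrite (sEi i his) mulr0 addr0 ypos.
  case: (boolP (i \in E)) => iE //=.
  by rewrite mulr0 addr0 yout // ltxx.
Qed.

End Code.

Lemma frobE (R : realType) (n : nat) (W : 'M[R]_n) : frob_norm W = Num.sqrt (Sn W).
Proof.
rewrite /frob_norm /Sn; congr Num.sqrt.
rewrite /mxtrace [RHS]exchange_big; apply: eq_bigr => i _.
rewrite mxE; apply: eq_bigr => j _; by rewrite !mxE expr2.
Qed.

Unset Implicit Arguments.
Theorem mainTheorem5 (R : realType) (n : nat) (W : 'M[R]_n) (E : {set 'I_n}) :
  dale_matrix W E ->
  W \in unitmx ->
  ground_assumption W ->
  frob_norm W < 1 ->
  (forall b : 'cV[R]_n, nonneg_vec b ->
     (exists! xs : 'cV[R]_n, fixed_point W b xs) /\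
     (forall xs, fixed_point W b xs -> glob_exp_stable W b xs) /\
     (forall xs, fixed_point W b xs -> asympt_stable W b xs)) /\
  comb_code W E = stable_comb_code W E /\
  stable_comb_code W E = graph_code W E (E_U W E).
Proof.
move=> hD _ _ hF.
have S1 : Sn W < 1 by rewrite -ltr_sqrt ?ltr01 // sqrtr1 -frobE.
split.
  move=> b hb; have [xs hxs] := fp_exists b S1.
  split.
    exists xs; split; first by apply/fpE.
    by move=> y /fpE hy; exact: fp_unique S1 hxs hy.
  by split => xs0 /fpE h0; [exact: ges | exact: ast].
split.
  rewrite /comb_code /stable_comb_code; apply/seteqP; split => s /=.
    case=> b [x [hb [hx [hfix ->]]]]; exists b, x; split => //; split => //; split => //.
    by apply: ast S1 _; apply/fpE.
  by case=> b [x [hb [hx [hst ->]]]]; exists b, x; split => //; split => //; split => //; case: hst.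
rewrite /stable_comb_code; apply/seteqP; split => s /=.
  by case=> b [x [hb [hx [hst ->]]]]; exact: (supp_closed hD hb hx hst.1).
move=> hs; have [b [x [hb [hx [hfx ->]]]]] := code_realize hD S1 hs.
exists b, x; split => //; split => //; split => //.
exact: ast S1 hfx.
Qed.
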